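(* Let $p$ be an odd prime and let $A$ be a $p\times p$ symmetric circulant matrix with entries in $\mathbb{Z}_p$. Then the nullity of $A$ over $\mathbb{Z}_p$ (i.e. $p-\operatorname{rank}_{\mathbb{Z}_p}A$) is not equal to $1$.
   Context: A $k\times k$ matrix $(a_{ij})$ is circulant if $a_{ij}=a_{i+1,j+1}$ for all $i,j$ (indices mod $k$). *)

(* Defs.v *)
From mathcomp Require Import all_boot all_order all_algebra.
Set Implicit Arguments. Unset Strict Implicit. Unset Printing Implicit Defensive.
Local Open Scope ring_scope.

Definition ord_succ (n : nat) (i : 'I_n) : 'I_n :=
  Ordinal (ltn_pmod i.+1 (leq_ltn_trans (leq0n i) (ltn_ord i))).

Definition circulant (R : Type) (n : nat) (A : 'M[R]_n) : Prop :=
  forall i j : 'I_n, A i j = A (ord_succ i) (ord_succ j).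

Definition symmetric_mx (R : Type) (n : nat) (A : 'M[R]_n) : Prop :=
  A^T = A.

(* Main.v *)
Require Import Defs.
From mathcomp Require Import all_boot all_order all_algebra finfield zify.
Import GRing.Theory.
Local Open Scope ring_scope.

Lemma modH (N l j k : nat) : (0 < N)%N -> (l < N)%N -> (j < N)%N ->
  (j == (l + k) %% N)%N = (l == (j + N - k %% N) %% N)%N.
Proof.
move=> N0 lN jN.
have kN : (k %% N < N)%N by rewrite ltn_mod.
set k' := (k %% N)%N.
have -> : ((l + k) %% N = (l + k') %% N)%N by rewrite modnDmr.
have e1 : (j == (l + k') %% N)%N = (j == l + k' %[mod N])%N by rewrite (modn_small jN).
have e2 : (l == (j + N - k') %% N)%N = (l == j + N - k' %[mod N])%N by rewrite (modn_small lN).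
rewrite e1 e2 -(eqn_modDr k' l) subnK; last first.
  by apply: leq_trans (ltnW kN) _; rewrite leq_addl.
by rewrite modnDr eq_sym.
Qed.

Lemma val_succ N (i : 'I_N) : val (ord_succ i) = (i.+1 %% N)%N.
Proof. by []. Qed.

Lemma val_iter N k (i : 'I_N) : val (iter k (@ord_succ N) i) = ((i + k) %% N)%N.
Proof.
elim: k => [|k IH] /=; first by rewrite addn0 modn_small.
by rewrite /= IH -addn1 modnDml addn1 addnS.
Qed.

Lemma circ_iter (R : Type) N (A : 'M[R]_N) : circulant A ->
  forall k i j, A i j = A (iter k (@ord_succ N) i) (iter k (@ord_succ N) j).
Proof. by move=> hc; elim=> [//|k IH] i j /=; rewrite IH hc. Qed.

Definition Pm (R : nzRingType) n : 'M[R]_n.+1 := \matrix_(i, j) ((j == ord_succ i)%:R).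

Lemma inordV n m : (m < n.+1)%N -> \val (inord m : 'I_n.+1) = m.
Proof. exact: inordK. Qed.

Lemma modS N x : ((x %% N).+1 %% N = x.+1 %% N)%N.
Proof. by rewrite -addn1 modnDml addn1. Qed.

Lemma PX (R : nzRingType) n k (i j : 'I_n.+1) :
  ((Pm R n) ^+ k) i j = ((nat_of_ord j == (i + k) %% n.+1)%N)%:R.
Proof.
elim: k j => [|k IH] j.
  by rewrite expr0 mxE addn0 modn_small // eq_sym.
rewrite exprSr -mulmxE mxE (bigD1 (inord ((i + k) %% n.+1))) //= big1 ?addr0.
  rewrite IH mxE inordV ?ltn_mod // eqxx mul1r.
  congr (_%:R); rewrite -val_eqE /= inordV ?ltn_mod //.
  by rewrite modS addnS.
move=> l hl; rewrite IH mxE.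
have -> : (val l == (i + k) %% n.+1)%N = false.
  apply/negP => /eqP e; move: hl; rewrite -val_eqE /= inordV ?ltn_mod // e eqxx //.
by rewrite mul0r.
Qed.

Lemma Aent (R : Type) n (A : 'M[R]_n.+1) : circulant A ->
  forall i j, A i j = A ord0 (inord ((j + n.+1 - i) %% n.+1)).
Proof.
move=> hc i j; rewrite (@circ_iter _ _ _ hc (n.+1 - i)); congr (A _ _); apply: val_inj.
  by rewrite val_iter subnKC ?modnn // ltnW.
by rewrite val_iter inordV ?ltn_mod // addnBA // ltnW.
Qed.

Lemma modV n (i : 'I_n) : (nat_of_ord i %% n = i)%N.
Proof. by apply: modn_small; case: i. Qed.

Lemma Adecomp (F : nzRingType) n (A : 'M[F]_n.+1) : circulant A ->
  A = \sum_(k < n.+1) A ord0 k *: (Pm F n) ^+ k.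
Proof.
move=> hc; apply/matrixP => i j; rewrite summxE (@Aent _ _ _ hc i j).
rewrite (bigD1 (inord ((j + n.+1 - i) %% n.+1))) //= big1 ?addr0.
  rewrite mxE PX (addnC i) modH // (modV _ i).
  by rewrite inordV ?ltn_mod // eqxx mulr1.
move=> k hk; rewrite mxE PX (addnC i) modH // (modV _ i).
move: hk; rewrite -val_eqE /= inordV ?ltn_mod // => /negbTE ->.
by rewrite mulr0.
Qed.

Lemma frob_sum (R : nzRingType) p (hp : p \in [pchar R]) (x : nat -> R) :
  (forall i j, GRing.comm (x i) (x j)) ->
  forall m, (\sum_(k < m) x k) ^+ p = \sum_(k < m) (x k) ^+ p.
Proof.
move=> hc; elim=> [|m IH].
  by rewrite !big_ord0 -(pFrobenius_autE hp) pFrobenius_aut0.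
rewrite !big_ord_recr /= -IH -!(pFrobenius_autE hp) pFrobenius_autD_comm //.
apply: commr_sym; apply: commr_sum => k _; exact: hc.
Qed.

Lemma PN (R : nzRingType) n : (Pm R n) ^+ n.+1 = 1.
Proof.
apply/matrixP => i j; rewrite PX modnDr (modV _ i) mxE.
by rewrite eq_sym -val_eqE.
Qed.

Lemma Apow n (hp : prime n.+1) (A : 'M['F_n.+1]_n.+1) : circulant A ->
  A ^+ n.+1 = (\sum_(k < n.+1) A ord0 k)%:M.
Proof.
move=> hc.
have hch : n.+1 \in [pchar 'M['F_n.+1]_n.+1] by rewrite pchar_lalg pchar_Fp.
pose x (k : nat) := A ord0 (inord k) *: (Pm 'F_n.+1 n) ^+ k.
have eA : A = \sum_(k < n.+1) x k.
  rewrite {1}(@Adecomp _ _ _ hc); apply: eq_bigr => k _.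
  by rewrite /x inord_val.
rewrite [in LHS]eA frob_sum //; last first.
  move=> i j; rewrite /x /GRing.comm -scalerAl -scalerAr -scalerAl -scalerAr.
  by rewrite -!exprD addnC !scalerA mulrC.
rewrite -scalemx1 scaler_suml; apply: eq_bigr => k _.
rewrite /x exprZn -exprM mulnC exprM PN expr1n inord_val.
have := expf_card (A ord0 k); rewrite card_Fp // => ->.
by rewrite scalemx1.
Qed.

Lemma sum_ind (R : nzRingType) n (f : 'I_n.+1 -> R) (j : 'I_n.+1) k :
  \sum_(l < n.+1) f l * ((nat_of_ord j == (l + k) %% n.+1)%N)%:R
  = f (inord ((j + n.+1 - k %% n.+1) %% n.+1)).
Proof.
rewrite (bigD1 (inord ((j + n.+1 - k %% n.+1) %% n.+1))) //= big1 ?addr0.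
  by rewrite modH // inordV ?ltn_mod // eqxx mulr1.
move=> l hl; rewrite modH //.
move: hl; rewrite -val_eqE /= inordV ?ltn_mod // => /negbTE ->.
by rewrite mulr0.
Qed.

Lemma eP (R : nzRingType) n k :
  (const_mx 1 : 'rV[R]_n.+1) *m (Pm R n) ^+ k = const_mx 1.
Proof.
apply/matrixP => i j; rewrite !mxE.
under eq_bigr => l _ do rewrite PX mxE.
by rewrite (sum_ind _ _ (fun _ => 1)).
Qed.

Lemma vP n (hp : prime n.+1) k :
  (\row_(j < n.+1) (nat_of_ord j)%:R : 'rV['F_n.+1]_n.+1) *m (Pm _ n) ^+ k =
  (\row_(j < n.+1) (nat_of_ord j)%:R) - k%:R *: const_mx 1.
Proof.
apply/matrixP => i j; rewrite !mxE.
under eq_bigr => l _ do rewrite PX mxE.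
  rewrite (sum_ind _ _ (fun l : 'I_n.+1 => (nat_of_ord l)%:R)) inordV ?ltn_mod // Fp_nat_mod // natrB; last first.
    by have := ltn_pmod k (ltn0Sn n); lia.
  have hN : (n.+1)%:R = 0 :> 'F_n.+1 by rewrite -(Fp_nat_mod hp) modnn.
  by rewrite mulr1 (Fp_nat_mod hp) natrD hN addr0.
Qed.

Lemma sig_inv n (k : 'I_n.+1) :
  (inord ((n.+1 - (inord ((n.+1 - k) %% n.+1) : 'I_n.+1)) %% n.+1) : 'I_n.+1) = k.
Proof.
apply: val_inj; rewrite /= !inordV ?ltn_mod //.
have [->|kp] := posnP k; first by rewrite subn0 modnn subn0 modnn.
have kN := ltn_ord k.
rewrite (modn_small (m := (n.+1 - k)%N)); last by lia.
by rewrite (modn_small (m := (n.+1 - (n.+1 - k))%N)); lia.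
Qed.

Lemma T0 n (hp : prime n.+1) (ho : odd n.+1) (A : 'M['F_n.+1]_n.+1) :
  symmetric_mx A -> circulant A ->
  \sum_(k < n.+1) (nat_of_ord k)%:R * A ord0 k = 0.
Proof.
move=> hs hc.
pose sg (k : 'I_n.+1) : 'I_n.+1 := inord ((n.+1 - k) %% n.+1).
have sgK : cancel sg sg by move=> k; exact: sig_inv.
have ha : forall k, A ord0 k = A ord0 (sg k).
  move=> k; rewrite -{1}hs mxE (@Aent _ _ _ hc k ord0) /sg /=.
  by rewrite add0n.
have hN : (n.+1)%:R = 0 :> 'F_n.+1 by rewrite -(Fp_nat_mod hp) modnn.
have hsg : forall k : 'I_n.+1, (nat_of_ord (sg k))%:R = - (nat_of_ord k)%:R :> 'F_n.+1.
  move=> k; rewrite /sg inordV ?ltn_mod // (Fp_nat_mod hp) natrB; last exact: ltnW.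
  by rewrite hN sub0r.
set T := \sum_(k < n.+1) _.
have eT : T = - T.
  rewrite {1}/T (reindex_inj (can_inj sgK)) /= -sumrN; apply: eq_bigr => k _.
  by rewrite hsg -ha mulNr.
have h2 : (2%:R : 'F_n.+1) != 0.
  rewrite -(dvdn_pcharf (pchar_Fp hp)); apply/negP => /dvdn_leq h.
  have : (n.+1 <= 2)%N by exact: h.
  have := prime_gt1 hp; move: ho; case: n {A hs hc T eT hN hsg sg sgK ha h hp} => [|[|[|m]]] //.
have : 2%:R * T = 0 by rewrite mulr2n mulrDl mul1r {1}eT addNr.
by move/eqP; rewrite mulf_eq0 (negbTE h2) /= => /eqP.
Qed.

Lemma main_n n (hp : prime n.+1) (ho : odd n.+1) (A : 'M['F_n.+1]_n.+1) :
  symmetric_mx A -> circulant A -> (n.+1 - \rank A)%N <> 1%N.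
Proof.
move=> hs hc.
set s := \sum_(k < n.+1) A ord0 k.
have eA := @Adecomp _ _ A hc.
have [s0|s0] := eqVneq s 0; last first.
  have hr : (n.+1 <= \rank A)%N.
    have hs1 : \rank (s%:M : 'M['F_n.+1]_n.+1) = n.+1.
      by rewrite -scalemx1 mxrank_scale_nz // mxrank1.
    have := mxrankM_maxl A (A ^+ n); rewrite mulmxE -exprS Apow // hs1 //.
  have := rank_leq_col A; lia.
move=> hk.
set e := (const_mx 1 : 'rV['F_n.+1]_n.+1).
set v := (\row_(j < n.+1) (nat_of_ord j)%:R : 'rV['F_n.+1]_n.+1).
have eK : (e <= kermx A)%MS.
  apply/sub_kermxP; rewrite eA mulmx_sumr.
  under eq_bigr => k _ do rewrite -scalemxAr eP.
  by rewrite -scaler_suml -/s s0 scale0r.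
have vK : (v <= kermx A)%MS.
  apply/sub_kermxP; rewrite eA mulmx_sumr.
  under eq_bigr => k _ do rewrite -scalemxAr vP // scalerBr scalerA.
  rewrite sumrB -scaler_suml -/s s0 scale0r sub0r -scaler_suml.
  have := @T0 _ hp ho _ hs hc.
  under eq_bigr => k _ do rewrite mulrC.
  by move=> ->; rewrite scale0r oppr0.
have rK : \rank (kermx A) = 1%N by rewrite mxrank_ker hk.
have e0 : e != 0.
  apply/negP => /eqP/matrixP/(_ 0 0); rewrite !mxE => /eqP; by rewrite oner_eq0.
have re : \rank e = 1%N.
  apply/eqP; rewrite eqn_leq rank_leq_row lt0n mxrank_eq0 e0 //.
have Ke : (kermx A <= e)%MS.
  by rewrite -(mxrank_leqif_sup eK).2 rK re.
have /submxP [D hD] := submx_trans vK Ke.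
have h0 := congr1 (fun M : 'rV_n.+1 => M 0 0) hD.
have h1 := congr1 (fun M : 'rV_n.+1 => M 0 (inord 1)) hD.
move: h0 h1; rewrite /= !mxE !big_ord1 !mxE inordV; last first.
  by have := prime_gt1 hp; lia.
by rewrite !mulr1 => <- /eqP; rewrite oner_eq0.
Qed.

Theorem lemma2p7 (p : nat) (hp : prime p) (hodd : odd p) (A : 'M['F_p]_p) :
  symmetric_mx A -> circulant A -> (p - \rank A)%N <> 1%N.
Proof.
case: p hp hodd A => [//|n] hp hodd A.
exact: main_n.
Qed.
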